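(* Let $f$ be a nonnegative locally integrable function on $\mathbb R$, $\lambda>0$, and let $\{I_i\}_{i=1}^m$ be a well-separated family of intervals such that for every $i$, $$\lambda\le\frac{\int_{I_i}f(y)\,dy}{|I_i|}\le2\lambda.$$ Then for every $1\le i\le m$ there exists $j_i\in[-50,50]\setminus\{0\}$ such that $$\Big|H\big(f\chi_{\bigcup_{i=1}^mI_i}\big)(x)\Big|\ge\frac\lambda8\qquad\text{for every }x\in\bigcup_{i=1}^mI_{i,j_i}.$$
   Context: $Hf(x)=\frac1\pi\lim_{\varepsilon\to0^+}\int_{|x-y|>\varepsilon}\frac{f(y)}{x-y}dy$. For an interval $I$ and an integer $j\in[-50,50]$, $I_j$ denotes the interval with $|I_j|=|I|$, $I_0=I$, and for $j\ne0$, $\mathrm{dist}(I_j,I)=(|j|-1)|I|$ with $I_j$ to the left of $I$ if $j<0$ and to the right if $j>0$; $I_{i,j}$ denotes $(I_i)_j$. A finite family of intervals $\{I_i\}$ is well-separated if the intervals $101I_i$ (same center, $101$ times the length) are pairwise disjoint. *)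

(* Defs.v *)
From HB Require Import structures.
From mathcomp Require Import all_boot all_order all_algebra.
From mathcomp Require Import all_classical all_reals all_analysis.
Set Implicit Arguments. Unset Strict Implicit. Unset Printing Implicit Defensive.
Import Order.TTheory GRing.Theory Num.Theory.
Import numFieldNormedType.Exports.
Local Open Scope classical_set_scope.
Local Open Scope ring_scope.

Section Defs.
Context {R : realType}.

Definition is_itv (I : R * R) : Prop := I.1 < I.2.
Definition itv_set (I : R * R) : set R := `]I.1, I.2[.
Definition itv_len (I : R * R) : R := I.2 - I.1.

(* I_j : same length, I_0 = I, dist(I_j, I) = (|j|-1)|I|, left for j<0,
   right for j>0; this is the translate of I by j|I|. *)
Definition itv_shift (I : R * R) (j : int) : R * R :=
  (I.1 + j%:~R * itv_len I, I.2 + j%:~R * itv_len I).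

Definition itv_dilate (c : R) (I : R * R) : R * R :=
  ((I.1 + I.2) / 2 - c * itv_len I / 2, (I.1 + I.2) / 2 + c * itv_len I / 2).

Definition well_separated (m : nat) (I : 'I_m -> R * R) : Prop :=
  forall i k : 'I_m, i != k ->
    itv_set (itv_dilate 101 (I i)) `&` itv_set (itv_dilate 101 (I k)) = set0.

Definition hilbert_trunc (g : R -> R) (eps x : R) : R :=
  pi^-1 * Rintegral lebesgue_measure [set y | eps < `|x - y|]
                                     (fun y => g y / (x - y)).

Definition hilbert_pv (g : R -> R) (x L : R) : Prop :=
  hilbert_trunc g eps x @[eps --> 0^'+] --> L.

End Defs.

(* Main.v *)
Require Import Defs.
From HB Require Import structures.
From mathcomp Require Import all_boot all_order all_algebra.
From mathcomp Require Import all_classical all_reals all_analysis.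
From mathcomp Require Import ring lra measurable_realfun.
Import Order.TTheory GRing.Theory Num.Theory.
Import numFieldNormedType.Exports.
Local Open Scope classical_set_scope.
Local Open Scope ring_scope.
Set Implicit Arguments. Unset Strict Implicit. Unset Printing Implicit Defensive.

Section S1. Context {R : realType}.
Local Notation mu := (@lebesgue_measure R).

Lemma pv_const (phi : R -> R) x (d : R) : 0 < d ->
  (forall y, `|x - y| < d -> phi y = 0) ->
  hilbert_pv phi x (pi^-1 * Rintegral mu setT (fun y => phi y / (x - y))).
Proof.
move=> d0 H; rewrite /hilbert_pv.
apply: cvg_near_cst.
near=> e.
rewrite /hilbert_trunc Rintegral_mkcond; congr (_ * _).
apply: eq_Rintegral => y _; rewrite patchE.
case: ifPn => // yD.
have ye : `|x - y| <= e.
  by rewrite leNgt; apply/negP => h; move/negP: yD; apply; rewrite inE.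
rewrite H ?mul0r //; apply: le_lt_trans ye _.
near: e; exact: nbhs_right_lt.
Unshelve. all: by end_near. Qed.

Definition kern (x d y : R) : R := (x - y) / Num.max ((x - y) * (x - y)) (d * d).

Lemma kern_cont x d : 0 < d -> continuous (kern x d).
Proof.
move=> d0 y; rewrite /kern.
apply: (continuousM (s := fun y => x - y) (t := fun y => (Num.max ((x - y) * (x - y)) (d * d))^-1)).
  apply: continuousB; [exact: cst_continuous|exact: id].
apply: continuousV.
  by rewrite gt_eqF // lt_max; apply/orP; right; rewrite mulr_gt0.
apply: (@continuous_max _ _ (fun y => (x - y) * (x - y)) (fun _ => d * d)).
  apply: (continuousM (s := fun y => x - y) (t := fun y => x - y)); apply: continuousB; (exact: cst_continuous || exact: id).
exact: cst_continuous.
Qed.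

Lemma kb (t d : R) : 0 < d -> `|t / Num.max (t^+2) (d^+2)| <= d^-1.
Proof.
move=> d0.
set M := Num.max _ _.
have M1 : t^+2 <= M by rewrite le_max lexx.
have M2 : d^+2 <= M by rewrite le_max lexx orbT.
have M0 : 0 < M by apply: lt_le_trans M2; rewrite exprn_gt0.
have key : `|t| * d <= M.
  rewrite -(real_normK (num_real t)) in M1.
  have := sqr_ge0 (`|t| - d). nra.
rewrite normrM normfV (ger0_norm (ltW M0)) ler_pdivrMr //.
apply: le_trans (_ : d^-1 * (`|t| * d) <= _).
  by rewrite mulrCA mulVf ?gt_eqF // mulr1.
by rewrite ler_pM2l ?invr_gt0.
Qed.
Lemma ke (t d : R) : 0 < d -> d <= `|t| -> t / Num.max (t^+2) (d^+2) = t^-1.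
Proof.
move=> d0 h.
have t0 : t != 0 by rewrite -normr_gt0; apply: lt_le_trans h.
rewrite max_l.
  by rewrite expr2 invfM mulrA divff ?mul1r.
rewrite -(real_normK (num_real t)) ler_pXn2r // ?nnegrE ?ltW //.
Qed.

Lemma kern_bnd x d y : 0 < d -> `|kern x d y| <= d^-1.
Proof. rewrite /kern -!expr2; exact: kb. Qed.

Lemma kern_eq x d y : 0 < d -> d <= `|x - y| -> kern x d y = (x - y)^-1.
Proof. rewrite /kern -!expr2; exact: ke. Qed.

Lemma int_kern (phi : R -> R) x d : 0 < d ->
  mu.-integrable setT (EFin \o phi) ->
  (forall y, `|x - y| < d -> phi y = 0) ->
  mu.-integrable setT (EFin \o (fun y => phi y / (x - y))).
Proof.
move=> d0 ip H.
have mk : measurable_fun setT (kern x d) := continuous_measurable_fun (@kern_cont x d d0).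
have bk : [bounded kern x d y | y in setT].
  exists d^-1; split; first exact: num_real.
  move=> M hM y _ /=.
  apply: le_trans (ltW hM); exact: kern_bnd.
have ik := integrableMl measurableT ip mk bk.
suff -> : (EFin \o (fun y => phi y / (x - y))) = ((EFin \o phi) \* (EFin \o kern x d))%E by [].
apply/funext => y /=.
have [h|h] := ltP `|x - y| d.
  by rewrite H // !mul0r mul0e.
by rewrite kern_eq.
Qed.

Lemma intZr (f : R -> R) r : mu.-integrable setT (EFin \o f) ->
  mu.-integrable setT (EFin \o (fun y => f y * r)).
Proof.
move=> hf.
suff -> : EFin \o (fun y => f y * r) = ((EFin \o f) \* cst r%:E)%E.
  exact: integrableZr.
by apply/funext => y /=; rewrite EFinM.
Qed.

Lemma intB (f g : R -> R) : mu.-integrable setT (EFin \o f) ->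
  mu.-integrable setT (EFin \o g) ->
  mu.-integrable setT (EFin \o (fun y => f y - g y)).
Proof.
move=> hf hg.
suff -> : EFin \o (fun y => f y - g y) = ((EFin \o f) \- (EFin \o g))%E.
  exact: integrableB.
by apply/funext => y /=; rewrite EFinB.
Qed.

Lemma inv_anti (u v : R) : u < v -> 0 < u * v -> v^-1 <= u^-1.
Proof.
move=> uv p.
have u0 : u != 0 by apply/eqP => u0; move: p; rewrite u0 mul0r ltxx.
have v0 : v != 0 by apply/eqP => v0; move: p; rewrite v0 mulr0 ltxx.
rewrite -subr_ge0.
have -> : u^-1 - v^-1 = (v - u) / (u * v) by field; rewrite u0 v0.
apply: divr_ge0; lra.
Qed.

Lemma ker_ineq (s L : R) : 0 < L -> (50 * L <= s \/ s <= - (51 * L)) ->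
  33 * ((s - L)^-1 - (s + 2 * L)^-1) <= (s - 49 * L)^-1 - (s + 50 * L)^-1.
Proof.
move=> L0 hs.
have D1 : 0 < (s - L) * (s + 2 * L) by case: hs => hs; nra.
have D2 : 0 < (s - 49 * L) * (s + 50 * L) by case: hs => hs; nra.
have n1 : s - L != 0 by case: hs => hs; apply/eqP; nra.
have n2 : s + 2 * L != 0 by case: hs => hs; apply/eqP; nra.
have n3 : s - 49 * L != 0 by case: hs => hs; apply/eqP; nra.
have n4 : s + 50 * L != 0 by case: hs => hs; apply/eqP; nra.
have -> : 33 * ((s - L)^-1 - (s + 2 * L)^-1) = (99 * L) / ((s - L) * (s + 2 * L)).
  by field; rewrite n1 n2.
have -> : (s - 49 * L)^-1 - (s + 50 * L)^-1 = (99 * L) / ((s - 49 * L) * (s + 50 * L)).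
  by field; rewrite n3 n4.
apply: ler_wpM2l; first lra.
rewrite lef_pV2 ?posrE //; nra.
Qed.
End S1.

Section S2. Context {R : realType}.
Local Notation mu := (@lebesgue_measure R).
Lemma key (n : nat) : (0 < n)%N -> 0 < (7/4:R)^+n / n`!%:R - (7/4)^+n.+2 / (n.+2)`!%:R.
Proof.
move=> n0.
rewrite !factS !natrM !exprS.
have f0 : (0:R) < n`!%:R by rewrite ltr0n fact_gt0.
have n1 : (2:R) <= n.+1%:R by rewrite ler_nat ltnS.
set F := n`!%:R in f0 *. set X := (7/4:R)^+n.
have X0 : 0 < X by rewrite exprn_gt0.
set a := n.+1%:R in n1 *. 
have -> : (n.+2)%:R = a + 1 :> R by rewrite /a -natr1.
clearbody F a X.
have -> : X / F - 7 / 4 * (7 / 4 * X) / ((a + 1) * (a * F)) = X / F * (((a+1)*a - 49/16)/((a+1)*a)).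
  field. rewrite !lt0r_neq0 //; lra.
apply: mulr_gt0; first exact: divr_gt0.
apply: divr_gt0; nra.
Qed.
Lemma cos74 : cos (7/4 : R) < 0.
Proof.
rewrite -(opprK (cos _)) oppr_lt0; have /cvgN h := @cvg_cos_coeff' R (7/4).
rewrite -(cvg_lim (@Rhausdorff R) h).
apply: (@lt_trans _ _ (\sum_(0 <= i < 3) - cos_coeff' (7/4 : R) i)).
  do 3 rewrite big_nat_recl//; rewrite big_nil addr0 /cos_coeff' /=.
  rewrite !factS fact0 -!exprnP /=. lra.
rewrite -seriesN lt_sum_lim_series //.
  by move/cvgP in h; by rewrite seriesN.
move=> d.
rewrite /cos_coeff'.
have -> : (3 + d.*2.+1).*2 = ((3 + d.*2).*2).+2 by rewrite addnS doubleS.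
have s1 : ((-1 : R) ^ (3 + d.*2)%N) = -1 by rewrite -exprnP -signr_odd oddD odd_double /= expr1.
have s2 : ((-1 : R) ^ (3 + d.*2.+1)%N) = 1 by rewrite -exprnP -signr_odd oddD /= odd_double /= expr0.
rewrite s1 s2.
have n0 : (0 < (3 + d.*2).*2)%N by [].
move: ((3 + d.*2).*2) n0 => n n0.
rewrite !mulN1r !mul1r mulNr opprK; apply: key.
by [].
Qed.
Lemma pi_lt72 : pi < (7/2 : R).
Proof.
have h := @ltr_cos R.
have P2 := @pi_ge2 R.
have c0 : cos (pi / 2) = 0 :> R by apply: cos_pihalf.
suff : (pi / 2 : R) < 7/4 by lra.
rewrite -h ?c0 ?cos74 //; rewrite in_itv /=; apply/andP; split; lra.
Qed.

End S2.

Section S3. Context {R : realType}.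
Local Notation mu := (@lebesgue_measure R).
Lemma fin_bound (lam z : R) : 0 < lam ->
  (pi * lam / 8 <= z \/ z <= - (pi * lam / 8)) -> lam / 8 <= `|pi^-1 * z|.
Proof.
move=> l0 hz.
have p0 : 0 < (pi : R) := pi_gt0 R.
rewrite normrM ger0_norm; last by rewrite invr_ge0 ltW.
have pl : 0 < pi * lam / 8 by rewrite divr_gt0 // mulr_gt0.
have hz' : pi * lam / 8 <= `|z|.
  case: hz => hz.
    by rewrite ger0_norm; lra.
  by rewrite ler0_norm; lra.
apply: le_trans (_ : lam / 8 <= pi^-1 * (pi * lam / 8)) _.
  by rewrite !mulrA mulVf ?gt_eqF // mul1r.
by rewrite ler_pM2l ?invr_gt0.
Qed.

Lemma per_i (I : R * R) (h g : R -> R) (lam : R) :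
  is_itv I -> 0 < lam ->
  mu.-integrable setT (EFin \o h) -> (forall y, 0 <= h y) ->
  (forall y, ~~ (I.1 < y < I.2) -> h y = 0) ->
  lam * itv_len I <= Rintegral mu setT h <= 2 * lam * itv_len I ->
  mu.-integrable setT (EFin \o g) -> (forall y, 0 <= g y) ->
  (forall y, I.1 - 50 * itv_len I < y < I.2 + 50 * itv_len I -> g y = 0) ->
  exists j : int, ((-50 <= j <= 50)%R /\ j != 0) /\
    forall x, itv_set (itv_shift I j) x ->
      exists Lv, hilbert_pv (fun y => h y + g y) x Lv /\ lam / 8 <= `|Lv|.
Proof.
case: I => a b; rewrite /is_itv /itv_len /= => ab lam0 ih h0 hs /andP[hm1 hm2] ig g0 gs.
set L := b - a in hm1 hm2 gs *.
have L0 : 0 < L by rewrite /L subr_gt0.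
have bE : b = a + L by rewrite /L; lra.
pose Q x := Rintegral mu setT (fun y => h y / (x - y)).
pose P x := Rintegral mu setT (fun y => g y / (x - y)).
pose cond x d := (b <= x - d /\ x + d <= b + 50 * L) \/ (a - 50 * L <= x - d /\ x + d <= a).
have pt : forall x d, 0 < d -> cond x d ->
   [/\ hilbert_pv (fun y => h y + g y) x (pi^-1 * (Q x + P x)),
       mu.-integrable setT (EFin \o (fun y => h y / (x - y))) &
       mu.-integrable setT (EFin \o (fun y => g y / (x - y)))].
  move=> x d d0 cd.
  have H : forall y, `|x - y| < d -> h y = 0 /\ g y = 0.
    move=> y; rewrite ltr_norml => /andP[y1 y2]; split.
      apply: hs; apply/negP => /andP[u v]; rewrite /cond in cd; case: cd => -[]; lra.
    apply: gs; apply/andP; rewrite /cond in cd; split; case: cd => -[]; lra.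
  have iq := int_kern d0 ih (fun y hy => (H y hy).1).
  have ip := int_kern d0 ig (fun y hy => (H y hy).2).
  split => //.
  have Hs : forall y, `|x - y| < d -> h y + g y = 0.
    by move=> y hy; rewrite (H y hy).1 (H y hy).2 addr0.
  have := pv_const d0 Hs.
  suff -> : Rintegral mu setT (fun y => (h y + g y) / (x - y)) = Q x + P x by [].
  rewrite -RintegralD //; apply: eq_Rintegral => y _; by rewrite mulrDl.
have gout : forall y, g y != 0 -> y <= a - 50 * L \/ b + 50 * L <= y.
  move=> y gy; have [y1|y1] := leP y (a - 50 * L); first by left.
  have [y2|y2] := leP (b + 50 * L) y; first by right.
  by move: gy; rewrite gs ?eqxx //; apply/andP; split.
have hin : forall y, h y != 0 -> a < y < b.
  move=> y hy; apply/negPn/negP => hn; move: hy; by rewrite hs ?eqxx.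
have Pmono : forall x1 x2 d1 d2, 0 < d1 -> 0 < d2 -> cond x1 d1 -> cond x2 d2 ->
    x1 < x2 -> P x2 <= P x1.
  move=> x1 x2 d1 d2 d10 d20 c1 c2 x12.
  have [_ _ i1] := pt _ _ d10 c1; have [_ _ i2] := pt _ _ d20 c2.
  apply: le_Rintegral => // y _.
  have [gy|gy] := eqVneq (g y) 0; first by rewrite gy !mul0r.
  apply: ler_wpM2l; first exact: g0.
  have [x1i x1s] : a - 50 * L < x1 /\ x1 < b + 50 * L by rewrite /cond in c1; case: c1 => -[]; split; lra.
  have [x2i x2s] : a - 50 * L < x2 /\ x2 < b + 50 * L by rewrite /cond in c2; case: c2 => -[]; split; lra.
  apply: inv_anti; first lra.
  case: (gout y gy) => hy; nra.
have cA : cond (a - L) L by rewrite /cond; right; split; lra.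
have cB : cond (b + L) L by rewrite /cond; left; split; lra.
have cC : cond (a - 49 * L) L by rewrite /cond; right; split; lra.
have cD : cond (b + 49 * L) L by rewrite /cond; left; split; lra.
have Pcmp : (P (a - L) - P (b + L)) * 33 <= P (a - 49 * L) - P (b + 49 * L).
  have [_ _ iA] := pt _ _ L0 cA; have [_ _ iB] := pt _ _ L0 cB.
  have [_ _ iC] := pt _ _ L0 cC; have [_ _ iD] := pt _ _ L0 cD.
  rewrite /P -!RintegralB // -RintegralZr //; last exact: intB.
  apply: le_Rintegral => //; [exact: intZr (intB iA iB)| exact: intB |].
  move=> y _.
  have [gy|gy] := eqVneq (g y) 0; first by rewrite gy !mul0r subrr mul0r.
  have hs' : 50 * L <= a - y \/ a - y <= - (51 * L) by case: (gout y gy) => hy; [left|right]; lra.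
  have K := ker_ineq L0 hs'.
  rewrite (_ : a - L - y = (a - y) - L); last by ring.
  rewrite (_ : b + L - y = (a - y) + 2 * L); last by rewrite bE; ring.
  rewrite (_ : a - 49 * L - y = (a - y) - 49 * L); last by ring.
  rewrite (_ : b + 49 * L - y = (a - y) + 50 * L); last by rewrite bE; ring.
  rewrite -!mulrBr -mulrA; apply: ler_wpM2l; first exact: g0.
  by rewrite mulrC.
set H := Rintegral mu setT h in hm1 hm2.
have QL : forall x d r, 0 < d -> cond x d -> (forall y, a < y < b -> r <= (x - y)^-1) ->
    H * r <= Q x.
  move=> x d r d0 c hr; have [_ iq _] := pt _ _ d0 c.
  rewrite /H -RintegralZr //; apply: le_Rintegral => //; first exact: intZr.
  move=> y _; have [hy|hy] := eqVneq (h y) 0; first by rewrite hy !mul0r.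
  by apply: ler_wpM2l; [exact: h0| apply: hr; exact: hin].
have QU : forall x d r, 0 < d -> cond x d -> (forall y, a < y < b -> (x - y)^-1 <= r) ->
    Q x <= H * r.
  move=> x d r d0 c hr; have [_ iq _] := pt _ _ d0 c.
  rewrite /H -RintegralZr //; apply: le_Rintegral => //; first exact: intZr.
  move=> y _; have [hy|hy] := eqVneq (h y) 0; first by rewrite hy !mul0r.
  by apply: ler_wpM2l; [exact: h0| apply: hr; exact: hin].
have Q1 : forall x d, 0 < d -> cond x d -> b < x < b + L -> lam / 2 <= Q x.
  move=> x d d0 c /andP[x1 x2].
  have hr : forall y, a < y < b -> (2 * L)^-1 <= (x - y)^-1.
    move=> y /andP[y1 y2]; rewrite lef_pV2 ?posrE; lra.
  apply: le_trans (QL x d _ d0 c hr).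
  rewrite ler_pdivlMr; last lra.
  nra.
have Q2 : forall x d, 0 < d -> cond x d -> a - L < x < a -> Q x <= - (lam / 2).
  move=> x d d0 c /andP[x1 x2].
  have hr : forall y, a < y < b -> (x - y)^-1 <= - (2 * L)^-1.
    move=> y /andP[y1 y2]; rewrite -opprB invrN lerN2 lef_pV2 ?posrE; lra.
  apply: le_trans (QU x d _ d0 c hr) _.
  rewrite mulrN lerN2 ler_pdivlMr; last lra.
  nra.
have Q3 : forall x d, 0 < d -> cond x d -> b + 49 * L <= x -> Q x <= 2 * lam / 49.
  move=> x d d0 c x1.
  have hr : forall y, a < y < b -> (x - y)^-1 <= (49 * L)^-1.
    move=> y /andP[y1 y2]; rewrite lef_pV2 ?posrE; lra.
  apply: le_trans (QU x d _ d0 c hr) _.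
  rewrite ler_pdivrMr; last lra.
  nra.
have Q4 : forall x d, 0 < d -> cond x d -> x <= a - 49 * L -> - (2 * lam / 49) <= Q x.
  move=> x d d0 c x1.
  have hr : forall y, a < y < b -> - (49 * L)^-1 <= (x - y)^-1.
    move=> y /andP[y1 y2]; rewrite -opprB invrN lerN2 lef_pV2 ?posrE; lra.
  apply: le_trans (QL x d _ d0 c hr).
  rewrite mulrN lerN2 ler_pdivrMr; last lra.
  nra.
have w0 : 2 * lam <= pi * lam by rewrite ler_pM2r // pi_ge2.
have w1 : pi * lam <= 7 / 2 * lam by rewrite ler_pM2r //; apply: ltW; exact: pi_lt72.
have memj : forall (j : int) x, itv_set (itv_shift (a, b) j) x ->
    a + j%:~R * L < x < b + j%:~R * L.
  by move=> j x; rewrite /itv_set /itv_shift /itv_len /= -/L in_itv.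
have fin1 : forall j : int, ((-50 <= j <= 50)%R /\ j != 0) ->
    (forall x, a + j%:~R * L < x < b + j%:~R * L -> exists d, [/\ 0 < d, cond x d &
       (pi * lam / 8 <= Q x + P x \/ Q x + P x <= - (pi * lam / 8))]) ->
    exists j : int, ((-50 <= j <= 50)%R /\ j != 0) /\
    forall x, itv_set (itv_shift (a, b) j) x ->
      exists Lv, hilbert_pv (fun y => h y + g y) x Lv /\ lam / 8 <= `|Lv|.
  move=> j hj Hx; exists j; split => // x /memj hx.
  have [d [d0 c hz]] := Hx x hx; have [pv _ _] := pt _ _ d0 c.
  by exists (pi^-1 * (Q x + P x)); split => //; exact: fin_bound.
have [c1|c1] := leP 0 (P (b + L)).
  apply: (fin1 1) => // x; rewrite (_ : (1:int)%:~R = 1 :> R) // mul1r => /andP[x1 x2].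
  exists (x - b); split; first lra.
    by rewrite /cond; left; split; lra.
  have hq := Q1 x (x - b) ltac:(lra) ltac:(rewrite /cond; left; split; lra) ltac:(apply/andP; split; lra).
  have hp := Pmono x (b + L) (x - b) L ltac:(lra) L0 ltac:(rewrite /cond; left; split; lra) cB ltac:(lra).
  left; lra.
have [c2|c2] := leP (P (a - L)) 0.
  apply: (fin1 (-1)) => // x; rewrite (_ : (-1:int)%:~R = -1 :> R) ?mulrNz // mulN1r => /andP[x1 x2].
  exists (a - x); split; first lra.
    by rewrite /cond; right; split; lra.
  have hq := Q2 x (a - x) ltac:(lra) ltac:(rewrite /cond; right; split; lra) ltac:(apply/andP; split; lra).
  have hp := Pmono (a - L) x L (a - x) L0 ltac:(lra) cA ltac:(rewrite /cond; right; split; lra) ltac:(lra).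
  right; lra.
have [c3|c3] := leP (P (b + 49 * L)) (- (pi * lam / 8 + 2 * lam / 49)).
  apply: (fin1 50) => // x; rewrite (_ : (50:int)%:~R = 50 :> R) // => /andP[x1 x2].
  exists (b + 50 * L - x); split; first lra.
    by rewrite /cond; left; split; lra.
  have hq := Q3 x (b + 50 * L - x) ltac:(lra) ltac:(rewrite /cond; left; split; lra) ltac:(lra).
  have hp := Pmono (b + 49 * L) x L (b + 50 * L - x) L0 ltac:(lra) cD ltac:(rewrite /cond; left; split; lra) ltac:(lra).
  right; lra.
have [c4|c4] := leP (pi * lam / 8 + 2 * lam / 49) (P (a - 49 * L)).
  apply: (fin1 (-50)) => // x; rewrite (_ : (-50:int)%:~R = -50 :> R) ?mulrNz // => /andP[x1 x2].
  exists (x - (a - 50 * L)); split; first lra.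
    by rewrite /cond; right; split; lra.
  have hq := Q4 x (x - (a - 50 * L)) ltac:(lra) ltac:(rewrite /cond; right; split; lra) ltac:(lra).
  have hp := Pmono x (a - 49 * L) (x - (a - 50 * L)) L ltac:(lra) L0 ltac:(rewrite /cond; right; split; lra) cC ltac:(lra).
  left; lra.
apply: (fin1 1) => // x; rewrite (_ : (1:int)%:~R = 1 :> R) // mul1r => /andP[x1 x2].
exists (x - b); split; first lra.
  by rewrite /cond; left; split; lra.
have hq := Q1 x (x - b) ltac:(lra) ltac:(rewrite /cond; left; split; lra) ltac:(apply/andP; split; lra).
have hp := Pmono x (b + L) (x - b) L ltac:(lra) L0 ltac:(rewrite /cond; left; split; lra) cB ltac:(lra).
left; lra.
Qed.
End S3.

Section S4. Context {R : realType}.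
Local Notation mu := (@lebesgue_measure R).

Lemma int_ind_f (f : R -> R) (A : set R) (c e : R) :
  locally_integrable setT f -> measurable A -> A `<=` `[c, e] ->
  mu.-integrable setT (EFin \o (fun y => \1_A y * f y)).
Proof.
move=> [mf _ fK] mA AK.
have iK : mu.-integrable `[c, e] (EFin \o f).
  apply/integrableP; split.
    apply/measurable_EFinP; apply: measurable_funS mf => //.
  by apply: fK => //; exact: segment_compact.
have iT : mu.-integrable setT ((EFin \o f) \_ `[c, e]) by rewrite -integrable_mkcond.
have mI : measurable_fun setT (\1_A : R -> R) := measurable_indic mA.
have bI : [bounded (\1_A y : R) | y in setT].
  exists 1; split; first exact: num_real.
  move=> M hM y _ /=; apply: le_trans (ltW hM); rewrite indicE.
  by case: (y \in A); rewrite ?normr1 ?normr0.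
have ik := integrableMl measurableT iT mI bI.
suff -> : EFin \o (fun y => \1_A y * f y) = ((EFin \o f) \_ `[c, e] \* (EFin \o \1_A))%E by [].
apply/funext => y /=; rewrite patchE indicE.
case: (boolP (y \in A)) => yA; last by rewrite /= mul0r mule0.
have yK : y \in `[c, e]%classic by apply/mem_set; apply: AK; exact/set_mem.
by rewrite yK /= mule1 mul1r.
Qed.
Lemma dil1 (a b y : R) : a < b -> a < y < b ->
  (a + b) / 2 - 101 * (b - a) / 2 < y < (a + b) / 2 + 101 * (b - a) / 2.
Proof. move=> ab /andP[u v]; apply/andP; split; lra. Qed.
Lemma dil2 (a b y : R) : a - 50 * (b - a) < y < b + 50 * (b - a) ->
  (a + b) / 2 - 101 * (b - a) / 2 < y < (a + b) / 2 + 101 * (b - a) / 2.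
Proof. move=> /andP[u v]; apply/andP; split; lra. Qed.
End S4.

Unset Implicit Arguments.
Theorem lemma3p8 (R : realType) (f : R -> R) (lambda : R) (m : nat)
    (I : 'I_m -> R * R) :
  (forall y, 0 <= f y) ->
  locally_integrable setT f ->
  0 < lambda ->
  (forall i, is_itv (I i)) ->
  well_separated I ->
  (forall i, lambda <= Rintegral lebesgue_measure (itv_set (I i)) f / itv_len (I i)
                    <= 2 * lambda) ->
  let U := \bigcup_(i in [set: 'I_m]) itv_set (I i) in
  let g := fun y => \1_U y * f y in
  exists J : 'I_m -> int,
    (forall i, (-50 <= J i <= 50)%R /\ J i != 0) /\
    forall x, (\bigcup_(i in [set: 'I_m]) itv_set (itv_shift (I i) (J i))) x ->
      exists L, hilbert_pv g x L /\ lambda / 8 <= `|L|.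
Proof.
move=> f0 lf lam0 isI ws hI U g.
have memI : forall (J : R * R) y, (y \in itv_set J) = (J.1 < y < J.2).
  move=> J y; apply/idP/idP.
    by move/set_mem; rewrite /itv_set /= in_itv.
  by move=> h; apply/mem_set; rewrite /itv_set /= in_itv.
pose M := \sum_(k < m) (`|(I k).1| + `|(I k).2|).
have UM : U `<=` `[-M, M].
  move=> y [k _]; rewrite /itv_set /= in_itv /= => /andP[y1 y2].
  have tk : `|(I k).1| + `|(I k).2| <= M.
    rewrite /M (bigD1 k) //= lerDl; apply: sumr_ge0 => j _; exact: addr_ge0.
  have a1 := ler_norm (I k).1; have a2 := ler_norm (- (I k).1); rewrite normrN in a2.
  have b1 := ler_norm (I k).2; have b2 := ler_norm (- (I k).2); rewrite normrN in b2.
  rewrite /= in_itv /=; apply/andP; split; lra.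
have mU : measurable U.
  apply: open_measurable; apply: bigcup_open => i _; exact: itv_open.
have ig := int_ind_f lf mU UM.
have key : forall i, exists j : int, ((-50 <= j <= 50)%R /\ j != 0) /\
    forall x, itv_set (itv_shift (I i) j) x ->
      exists Lv, hilbert_pv g x Lv /\ lambda / 8 <= `|Lv|.
  move=> i.
  pose h := fun y => \1_(itv_set (I i)) y * f y.
  have ih : lebesgue_measure.-integrable setT (EFin \o h).
    apply: (int_ind_f (c := (I i).1) (e := (I i).2) lf) => //.
      exact: measurable_itv.
    move=> y; rewrite /itv_set /= !in_itv /= => /andP[u v]; apply/andP; split; exact: ltW.
  have h0 : forall y, 0 <= h y by move=> y; rewrite /h mulr_ge0 // indicE ler0n.
  have hs : forall y, ~~ ((I i).1 < y < (I i).2) -> h y = 0.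
    by move=> y hy; rewrite /h indicE memI (negbTE hy) mul0r.
  have L0 : 0 < itv_len (I i) by rewrite /itv_len subr_gt0; exact: isI.
  have hm : lambda * itv_len (I i) <= Rintegral lebesgue_measure setT h <= 2 * lambda * itv_len (I i).
    have -> : Rintegral lebesgue_measure setT h = Rintegral lebesgue_measure (itv_set (I i)) f.
      rewrite [RHS]Rintegral_mkcond; apply: eq_Rintegral => y _; rewrite /h patchE indicE.
      by case: (y \in _); rewrite ?mul1r ?mul0r.
    have /andP[u v] := hI i.
    move: u v; rewrite ler_pdivlMr // ler_pdivrMr // => u v.
    by apply/andP; split; [exact: u| exact: v].
  have inU : forall y, (I i).1 < y < (I i).2 -> \1_U y = 1 :> R.
    move=> y hy; rewrite indicE (_ : y \in U) //; apply/mem_set; exists i => //.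
  have ig' := intB ig ih.
  have g0' : forall y, 0 <= g y - h y.
    move=> y; case: (boolP ((I i).1 < y < (I i).2)) => hy.
      by rewrite /g /h inU // indicE memI hy subrr.
    by rewrite hs // subr0 /g mulr_ge0 // indicE ler0n.
  have gs' : forall y, (I i).1 - 50 * itv_len (I i) < y < (I i).2 + 50 * itv_len (I i) ->
      g y - h y = 0.
    move=> y hy; case: (boolP ((I i).1 < y < (I i).2)) => hy'.
      by rewrite /g /h inU // indicE memI hy' subrr.
    rewrite hs // subr0 /g indicE (_ : y \in U = false) ?mul0r //.
    apply/negbTE/negP => /set_mem [k _ yk].
    have ki : k != i.
      apply/eqP => ki; move: yk; rewrite ki /itv_set /= in_itv /= => yk.
      by move: hy'; rewrite yk.
    have := ws k i ki; move/eqP; apply/negP; apply/set0P; exists y; split.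
      move: yk; rewrite /itv_set /itv_dilate /itv_len /= !in_itv /= => yk.
      exact: dil1 (isI k) yk.
    move: hy; rewrite /itv_set /itv_dilate /itv_len /= !in_itv /= => hy.
    exact: dil2.
  have [j [hj Hj]] := per_i (isI i) lam0 ih h0 hs hm ig' g0' gs'.
  exists j; split => // x hx; have [Lv [pv hL]] := Hj x hx; exists Lv; split => //.
  have -> : g = (fun y => h y + (g y - h y)) by apply/funext => y; rewrite addrC subrK.
  exact: pv.
have [J HJ] := choice key.
exists J; split; first by move=> i; exact: (HJ i).1.
by move=> x [i _ hx]; exact: (HJ i).2 x hx.
Qed.
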